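(* Let $S$ be a numerical semigroup with multiplicity $e$ and minimal generators $e<a_1<\dots<a_t$, and let $0\le i<e$. Then ${\rm d}_{\max}(S_i)=\max_{u\in{\rm adj}(S_i)}|\mathcal R(u)|$, where ${\rm d}_{\max}(S_i)=\max_{s\in S_i}{\rm d}_{\max}(s;S)$.
   Context: A numerical semigroup is a submonoid of $(\mathbb N,+)$ with finite complement. An $S$-factorization of $n\in S$ is $(c_0,\dots,c_t)\in\mathbb N^{t+1}$ with $c_0e+\sum c_ia_i=n$, of length $\sum c_i$. ${\rm ord}(n;S)$ is the maximal such length, and ${\rm d}_{\max}(n;S)$ is the number of $S$-factorizations of $n$ of length ${\rm ord}(n;S)$. Let $d_i=a_i-e$, $B=\langle e,d_1,\dots,d_t\rangle$, $\mathcal D=(e,d_1,\dots,d_t)$. A $B^{\mathcal D}$-factorization of $b\in B$ is $(x_0,\dots,x_t)\in\mathbb N^{t+1}$ with $x_0e+\sum x_id_i=b$, of length $\sum x_i$. $\min{\rm ord}(b;B^{\mathcal D})$ is the minimal such length, and $\mathcal P(b)$ is the set of all of them. Put ${\rm adj}(s)=s-{\rm ord}(s;S)e$ and $S_i=\{s\in S:s\equiv i\pmod e\}$. Write ${\rm adj}(S_i)=\{{\rm adj}(s):s\in S_i\}=\{u_0<u_1<\cdots\}$. Define $\mathcal R(u_0)=\mathcal P(u_0)$ and, for $j>0$, $\mathcal R(u_j)=\{\mathbf x\in\mathcal P(u_j):|\mathbf x|<\min{\rm ord}(u_{j-1};B^{\mathcal D})-\frac{u_j-u_{j-1}}{e}\}$.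 *)

(* Defs.v *)
From mathcomp Require Import all_boot.
Set Implicit Arguments.
Unset Strict Implicit.
Unset Printing Implicit Defensive.

(* When all g_j are positive
   (always the case below) every coordinate is <= n, so we may take the
   coordinates in 'I_n.+1 without losing any factorization. *)
Definition factvec (g : seq nat) (n : nat) := {ffun 'I_(size g) -> 'I_n.+1}.

Definition facts (g : seq nat) (n : nat) : {set factvec g n} :=
  [set x : factvec g n | \sum_(j < size g) (x j : nat) * nth 0 g j == n].

Definition flen (g : seq nat) (n : nat) (x : factvec g n) : nat :=
  \sum_(j < size g) (x j : nat).

Definition inmon (g : seq nat) (n : nat) : bool := facts g n != set0.

Definition Sgens (e : nat) (a : seq nat) : seq nat := e :: a.

Definition Dgens (e : nat) (a : seq nat) : seq nat := e :: [seq ai - e | ai <- a].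

Definition ordS (e : nat) (a : seq nat) (n : nat) : nat :=
  \max_(x in facts (Sgens e a) n) flen x.

Definition dmax (e : nat) (a : seq nat) (n : nat) : nat :=
  #|[set x in facts (Sgens e a) n | flen x == ordS e a n]|.

(* min ord(b; B^D): minimal length of a B^D-factorization of b.  (All entries
   of D are >= 1, so every length is <= b and the default value b is never
   reached when b is in B.) *)
Definition minordB (e : nat) (a : seq nat) (b : nat) : nat :=
  \big[minn/b]_(x in facts (Dgens e a) b) flen x.

Definition Pset (e : nat) (a : seq nat) (b : nat) := facts (Dgens e a) b.

Definition adj (e : nat) (a : seq nat) (s : nat) : nat := s - ordS e a s * e.

Definition inSi (e : nat) (a : seq nat) (i s : nat) : Prop :=
  inmon (Sgens e a) s /\ s %% e = i.

Definition in_adjSi (e : nat) (a : seq nat) (i u : nat) : Prop :=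
  exists s, inSi e a i s /\ adj e a s = u.

Definition Rset_succ (e : nat) (a : seq nat) (u u' : nat) :=
  [set x in Pset e a u | (flen x + (u - u') %/ e < minordB e a u')%N].

(* |R(u)| = m, for u \in adj(S_i) = {u_0 < u_1 < ...}:
   either u = u_0 (the least element) and R(u) = P(u), or u = u_j with j > 0
   and u' = u_{j-1} is the largest element of adj(S_i) below u. *)
Definition Rcard (e : nat) (a : seq nat) (i u m : nat) : Prop :=
  ((forall v, in_adjSi e a i v -> u <= v) /\ #|Pset e a u| = m)
  \/ (exists u', [/\ in_adjSi e a i u', u' < u,
                     (forall v, in_adjSi e a i v -> v < u -> v <= u')
                   & #|Rset_succ e a u u'| = m]).

Definition numsg_min_gens (e : nat) (a : seq nat) : Prop :=
  [/\ 0 < e,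
      sorted ltn (Sgens e a),
      (exists N, forall n, N <= n -> inmon (Sgens e a) n)
    & forall k, k < size (Sgens e a) ->
        ~~ inmon (take k (Sgens e a) ++ drop k.+1 (Sgens e a))
                 (nth 0 (Sgens e a) k)].

(* Main.v *)
Require Import Defs.
From mathcomp Require Import all_boot zify.
From Stdlib Require Import Classical.
Require Import Defs.
Set Implicit Arguments.
Unset Strict Implicit.
Unset Printing Implicit Defensive.

Fixpoint dot (l g : seq nat) : nat :=
  match l, g with x :: l', y :: g' => x * y + dot l' g' | _, _ => 0 end.

Lemma dot_big (l g : seq nat) : size l = size g ->
  \sum_(0 <= j < size g) nth 0 l j * nth 0 g j = dot l g.
Proof.
elim: g l => [|y g IH] [|x l] //=; first by rewrite big_nil.
move=> [] Hs; rewrite big_nat_recl //= IH //.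
Qed.

Lemma sumn_big (l : seq nat) : \sum_(0 <= j < size l) nth 0 l j = sumn l.
Proof.
elim: l => [|x l IH] /=; first by rewrite big_nil.
by rewrite big_nat_recl // IH.
Qed.

Lemma nth_le_dot (l g : seq nat) j : all (fun y => 0 < y) g -> size l = size g ->
  nth 0 l j <= dot l g.
Proof.
elim: g l j => [|y g IH] [|x l] [|j] //=.
- move=> /andP[Hy _] _; have : x <= x * y by rewrite leq_pmulr.
  move=> h; exact: leq_trans h (leq_addr _ _).
- move=> /andP[_ Hg] [] Hs; exact: leq_trans (IH _ _ Hg Hs) (leq_addl _ _).
Qed.

Lemma sumn_le_dot (l g : seq nat) : all (fun y => 0 < y) g -> size l = size g ->
  sumn l <= dot l g.
Proof.
elim: g l => [|y g IH] [|x l] //= /andP[Hy Hg] [] Hs.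
apply: leq_add; last exact: IH.
by rewrite leq_pmulr.
Qed.

Section FV.
Variables (g : seq nat) (n : nat).

Definition tv (x : factvec g n) : seq nat := [seq (x j : nat) | j <- enum 'I_(size g)].

Lemma size_tv x : size (tv x) = size g.
Proof. by rewrite /tv size_map size_enum_ord. Qed.

Lemma nth_tv x (j : 'I_(size g)) : nth 0 (tv x) j = x j.
Proof.
by rewrite /tv (nth_map j) ?nth_ord_enum // size_enum_ord.
Qed.

Lemma tv_inj : injective tv.
Proof.
move=> x y H; apply/ffunP => j; apply/val_inj.
by have := congr1 (fun l => nth 0 l j) H; rewrite /= !nth_tv.
Qed.

Lemma in_facts x : (x \in facts g n) = (dot (tv x) g == n).
Proof.
rewrite /facts inE -dot_big ?size_tv // big_mkord.
by congr (_ == _); apply: eq_bigr => j _; rewrite nth_tv.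
Qed.

Lemma flen_tv x : flen x = sumn (tv x).
Proof.
rewrite -sumn_big size_tv big_mkord /flen.
by apply: eq_bigr => j _; rewrite nth_tv.
Qed.

Definition mkfv (l : seq nat) : factvec g n := [ffun j : 'I_(size g) => (inord (nth 0 l j) : 'I_n.+1)].

Lemma tv_mk l : size l = size g -> (forall j, nth 0 l j <= n) -> tv (mkfv l) = l.
Proof.
move=> Hs Hb; rewrite /tv.
transitivity [seq nth 0 l (val j) | j : 'I_(size g) <- enum 'I_(size g)].
  by apply: eq_map => j; rewrite ffunE inordK // ltnS.
by rewrite (map_comp (nth 0 l) val) val_enum_ord -Hs; exact: mkseq_nth.
Qed.

Lemma mk_facts l : all (fun y => 0 < y) g -> size l = size g -> dot l g = n ->
  exists2 x, x \in facts g n & tv x = l.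
Proof.
move=> Hp Hs Hd.
have Hb : forall j, nth 0 l j <= n by move=> j; rewrite -Hd; exact: nth_le_dot.
exists (mkfv l); last exact: tv_mk.
by rewrite in_facts tv_mk // Hd.
Qed.

End FV.

Lemma maxP (P : nat -> Prop) n : (exists k, P k) -> (forall k, P k -> k <= n) ->
  exists m, P m /\ forall k, P k -> k <= m.
Proof.
elim: n P => [|n IH] P [k Pk] Hb.
  by exists 0; have := Hb k Pk; rewrite leqn0 => /eqP E; subst k; split => // j /Hb; rewrite leqn0.
case: (classic (P n.+1)) => [Pn | Pn].
  by exists n.+1; split.
apply: IH; first by exists k.
move=> j Pj; have := Hb j Pj; rewrite leq_eqVlt => /orP[/eqP E|] //.
by subst j.
Qed.

Lemma bigmin_le (T : eqType) (r : seq T) (P : pred T) (F : T -> nat) b x :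
  x \in r -> P x -> \big[minn/b]_(y <- r | P y) F y <= F x.
Proof.
elim: r => [|z r IH] //; rewrite inE big_cons => /orP[/eqP-> -> | xr Px].
  exact: geq_minl.
case: (P z); last exact: IH.
exact: leq_trans (geq_minr _ _) (IH xr Px).
Qed.

Lemma bigmin_att (T : eqType) (r : seq T) (P : pred T) (F : T -> nat) b :
  (forall y, P y -> F y <= b) -> has P r ->
  exists2 x, P x & \big[minn/b]_(y <- r | P y) F y = F x.
Proof.
move=> Hb; elim: r => [|z r IH] //=; rewrite big_cons.
case Pz: (P z) => /=.
  case hr: (has P r).
    have [x Px ->] := IH hr.
    case: (leqP (F z) (F x)) => h.
      by exists z => //; rewrite /minn ltnNge h.
    by exists x => //; rewrite /minn h.
  by exists z => //; rewrite big_hasC ?hr //; apply/minn_idPl; exact: Hb.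
by move=> hr; exact: IH.
Qed.

Lemma dot_shift_gen e a y : all (fun x => e < x) a -> size y = size a ->
  dot y a = dot y [seq x - e | x <- a] + sumn y * e.
Proof.
elim: a y => [|z r IH] [|x y] //= /andP[Hz Hr] [] Hs.
rewrite IH //; nia.
Qed.

Section S.
Variables (e : nat) (a : seq nat).
Hypothesis (He : 0 < e) (Ha : all (fun x => e < x) a).

Definition ad := [seq x - e | x <- a].
Definition W y := dot y ad.

Lemma size_ad : size ad = size a. Proof. exact: size_map. Qed.

Lemma posS : all (fun y => 0 < y) (Sgens e a).
Proof.
rewrite /= He /=; apply/allP => x xa; have := allP Ha x xa.
exact: leq_ltn_trans.
Qed.

Lemma posD : all (fun y => 0 < y) (Dgens e a).
Proof.
rewrite /= He /=; apply/allP => x /mapP[y ya ->]; have := allP Ha y ya.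
by rewrite subn_gt0.
Qed.

Lemma dot_shift y : size y = size a -> dot y a = W y + sumn y * e.
Proof. exact: dot_shift_gen. Qed.

Lemma dotS c0 y : size y = size a -> dot (c0 :: y) (Sgens e a) = sumn (c0 :: y) * e + W y.
Proof. move=> Hs; rewrite /= dot_shift //; lia. Qed.

Lemma dotD x0 y : dot (x0 :: y) (Dgens e a) = x0 * e + W y.
Proof. by []. Qed.

Definition fS s c := size c = (size a).+1 /\ dot c (Sgens e a) = s.
Definition fD b c := size c = (size a).+1 /\ dot c (Dgens e a) = b.

Lemma factS_tv s x : x \in facts (Sgens e a) s -> fS s (tv x).
Proof. by rewrite in_facts /fS size_tv => /eqP. Qed.

Lemma factD_tv s x : x \in facts (Dgens e a) s -> fD s (tv x).
Proof. by rewrite in_facts /fD size_tv /= size_map => /eqP. Qed.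

Lemma fS_mk s c : fS s c -> exists2 x, x \in facts (Sgens e a) s & tv x = c.
Proof. case=> h1 h2; apply: mk_facts => //; exact: posS. Qed.

Lemma fD_mk s c : fD s c -> exists2 x, x \in facts (Dgens e a) s & tv x = c.
Proof. case=> h1 h2; apply: mk_facts => //; [exact: posD | by rewrite /= size_map]. Qed.

Lemma inmonP s : inmon (Sgens e a) s <-> exists c, fS s c.
Proof.
rewrite /inmon; split.
  by case/set0Pn => x /factS_tv; exists (tv x).
by case=> c /fS_mk [x xf _]; apply/set0Pn; exists x.
Qed.

Lemma ordS_ge s c : fS s c -> sumn c <= ordS e a s.
Proof.
case/fS_mk => x xf <-; rewrite -flen_tv /ordS.
by apply: leq_bigmax_cond.
Qed.

Lemma ordS_att s : inmon (Sgens e a) s -> exists c, fS s c /\ sumn c = ordS e a s.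
Proof.
move=> Hs; have : 0 < #|facts (Sgens e a) s| by rewrite card_gt0.
case/(eq_bigmax_cond (fun x => flen x)) => x xf Hx.
by exists (tv x); split; [exact: factS_tv | rewrite -flen_tv /ordS Hx].
Qed.

Lemma minord_le b c : fD b c -> minordB e a b <= sumn c.
Proof.
case/fD_mk => x xf <-; rewrite -flen_tv /minordB.
by apply: bigmin_le => //; exact: mem_index_enum.
Qed.

Lemma minord_att b : (exists c, fD b c) -> exists c, fD b c /\ sumn c = minordB e a b.
Proof.
case=> c0 /fD_mk [x0 x0f _].
have [x xf Hx] : exists2 x, x \in facts (Dgens e a) b &
   \big[minn/b]_(y <- index_enum _ | y \in facts (Dgens e a) b) flen y = flen x.
  apply: bigmin_att.
    move=> y /factD_tv [h1 h2]; rewrite flen_tv.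
    have h3 : size (tv y) = size (Dgens e a) by rewrite h1 /= size_map.
    by have := sumn_le_dot posD h3; rewrite h2.
  by apply/hasP; exists x0 => //; exact: mem_index_enum.
by exists (tv x); split; [exact: factD_tv | rewrite -flen_tv /minordB Hx].
Qed.

Lemma fS_y s c0 y : fS s (c0 :: y) <-> size y = size a /\ s = sumn (c0 :: y) * e + W y.
Proof.
rewrite /fS; split.
  by case=> [[h1] h2]; split=> //; rewrite -h2 dotS.
by case=> h1 h2; split; [rewrite /= h1 | rewrite dotS].
Qed.

Lemma fD_y b x0 y : fD b (x0 :: y) <-> size y = size a /\ b = x0 * e + W y.
Proof.
rewrite /fD; split; first by case=> [[h1] h2].
by case=> h1 h2; split; [rewrite /= h1 | rewrite dotD].
Qed.

Lemma adj_le l y : size y = size a -> sumn y <= l ->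
  inmon (Sgens e a) (l * e + W y) /\ l <= ordS e a (l * e + W y).
Proof.
move=> Hs Hl.
have H : fS (l * e + W y) ((l - sumn y) :: y).
  by apply/fS_y; split => //=; rewrite subnK.
split; first by apply/inmonP; exists ((l - sumn y) :: y).
by have := ordS_ge H; rewrite /= subnK.
Qed.

Lemma adj_spec s : inmon (Sgens e a) s -> exists y, [/\ size y = size a,
  sumn y <= ordS e a s, W y = adj e a s & s = ordS e a s * e + adj e a s].
Proof.
case/ordS_att => [[|c0 y] [Hf Hl]]; first by case: Hf.
have := Hf; case/fS_y => Hs Hs'.
exists y; split => //.
- by rewrite -Hl /= leq_addl.
- by rewrite /adj -Hl Hs' addKn.
- by rewrite /adj -Hl Hs' addKn.
Qed.

Lemma adj_mono s m : inmon (Sgens e a) s ->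
  inmon (Sgens e a) (s + m * e) /\ adj e a (s + m * e) <= adj e a s.
Proof.
case/adj_spec => y [Hs Hl Hw Hsd].
have := adj_le (l := ordS e a s + m) Hs (leq_trans Hl (leq_addr _ _)).
have -> : (ordS e a s + m) * e + W y = s + m * e.
  by rewrite mulnDl Hw; move: Hsd; clear; lia.
case=> Hm Ho; split => //.
have [y' [_ _ _ Hsd']] := adj_spec Hm.
have Hle := leq_mul Ho (leqnn e).
move: Hsd Hsd' Hle; rewrite mulnDl; clear; lia.
Qed.


Definition Qset u L := [set x in Pset e a u | (nth 0 (tv x) 0 == 0) && (flen x <= L)].

Lemma dmax_Q s : inmon (Sgens e a) s -> dmax e a s = #|Qset (adj e a s) (ordS e a s)|.
Proof.
move=> Hs; have [y0 [_ _ _ Hsd]] := adj_spec Hs.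
rewrite /dmax /Qset; move: Hsd.
set L := ordS e a s; set u := adj e a s => Hsd.
pose A := [set x in facts (Sgens e a) s | flen x == L].
pose phi := fun x : factvec (Sgens e a) s => mkfv (Dgens e a) u (0 :: behead (tv x)).
have hA : forall x, x \in A -> exists y, [/\ tv x = (L - sumn y) :: y, size y = size a,
     W y = u, sumn y <= L & tv (phi x) = 0 :: y].
  move=> x; rewrite inE => /andP[xf /eqP xl].
  have := factS_tv xf; rewrite flen_tv in xl.
  case E: (tv x) xl => [|c0 y] xl; first by case.
  case/fS_y => Hsz Hs'.
  have HW : W y = u by move: Hs' Hsd; rewrite xl; clear; lia.
  exists y; split => //.
  - by congr (_ :: _); move: xl => /= <-; rewrite addnK.
  - by rewrite -xl /= leq_addl.
  - rewrite /phi E /= tv_mk //=; first by rewrite size_map Hsz.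
    move=> j; have h : size (0 :: y) = size (Dgens e a) by rewrite /= size_map Hsz.
    by have := nth_le_dot j posD h; rewrite dotD mul0n add0n HW.
rewrite -[X in X = _](card_in_imset (f := phi) (D := mem A)).
  congr #|pred_of_set _|; apply/setP => z; rewrite inE.
  apply/imsetP/idP.
    case=> x xA ->; have [y [_ Hsz HW Hl Ht]] := hA x xA.
    have hP : phi x \in Pset e a u by rewrite /Pset in_facts Ht dotD HW mul0n add0n.
    rewrite in_set; apply/andP; split; first by move: hP; rewrite inE.
    by rewrite Ht /= flen_tv Ht /= Hl.

  rewrite inE => /andP[zf0 /andP[/eqP z0 zl]].
  have zf : z \in facts (Dgens e a) u by rewrite inE.
  have := factD_tv zf; rewrite flen_tv in zl.
  case E: (tv z) z0 zl => [|x0 y]; first by case: (factD_tv zf); rewrite E.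
  move=> /= Hx0 zl; subst x0.
  case/fD_y => Hsz Hu.
  have Hc : fS s ((L - sumn y) :: y).
    by apply/fS_y; split => //=; rewrite subnK // Hsd Hu /=.
  have [x xf xt] := fS_mk Hc.
  have xA : x \in A by rewrite inE xf flen_tv xt /= subnK.
  exists x => //; apply: (@tv_inj (Dgens e a) u); rewrite E.
  by have [y' [E' _ _ _ ->]] := hA x xA; move: E'; rewrite xt => -[_ ->].
move=> x1 x2 x1A x2A Hp.
have [y1 [E1 _ _ _ T1]] := hA x1 x1A.
have [y2 [E2 _ _ _ T2]] := hA x2 x2A.
have : tv (phi x1) = tv (phi x2) by rewrite Hp.
rewrite T1 T2 => -[Hy]; apply: tv_inj; by rewrite E1 E2 Hy.
Qed.

Lemma Q_sub u L : Qset u L \subset Pset e a u.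
Proof. by apply/subsetP => x; rewrite inE => /andP[]. Qed.


Lemma adj_mod s : inmon (Sgens e a) s -> adj e a s %% e = s %% e.
Proof.
case/adj_spec => y [_ _ _ Hsd].
move: Hsd; set u := adj e a s; set L := ordS e a s => ->.
by rewrite modnMDl.
Qed.

Lemma modK u u' : u' <= u -> u %% e = u' %% e -> u = u' + (u - u') %/ e * e.
Proof.
move=> Hl Hm.
have Hd : e %| u - u' by rewrite -eqn_mod_dvd // Hm.
rewrite divnK //; lia.
Qed.

Lemma x0_zero s L u x0 y : ordS e a s = L -> s = L * e + u -> fD u (x0 :: y) ->
  sumn y <= L + x0 -> x0 = 0.
Proof.
move=> HL Hs /fD_y [Hsz Hu] Hl.
have [_ Ho] := adj_le Hsz Hl.
have : (L + x0) * e + W y = s by rewrite Hs Hu; lia.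
move=> E; rewrite E HL in Ho; lia.
Qed.

Lemma claimA s u' y : inmon (Sgens e a) s -> (exists c, fD u' c) ->
  u' < adj e a s -> adj e a s %% e = u' %% e ->
  size y = size a -> W y = adj e a s -> sumn y <= ordS e a s ->
  sumn y + (adj e a s - u') %/ e < minordB e a u'.
Proof.
move=> Hs Hne Hlt Hm Hsz HW Hl.
have [_ [_ _ _ Hsd]] := adj_spec Hs.
have HK := modK (ltnW Hlt) Hm.
move: HK Hsd Hl Hlt; set K := (adj e a s - u') %/ e; set L := ordS e a s;
  set u := adj e a s => HK Hsd Hl Hlt.
have K1 : 0 < K by move: HK Hlt; case: K => //; lia.
rewrite ltnNge; apply/negP => Hm'.
have [[|z0 yz] [Hz Hzl]] := minord_att Hne; first by case: Hz.
case/fD_y: Hz => Hzsz Hu'.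
have Hyz : sumn yz <= L + K + z0.
  by move: Hzl Hm' Hl => /= ; lia.
have [_ Ho] := adj_le Hzsz Hyz.
have E : (L + K + z0) * e + W yz = s by rewrite Hsd HK Hu'; lia.
rewrite E -/L in Ho; lia.
Qed.


Lemma tv_D u (x : factvec (Dgens e a) u) : x \in Pset e a u ->
  exists x0 y, tv x = x0 :: y /\ fD u (x0 :: y).
Proof.
move=> /factD_tv; case E: (tv x) => [|x0 y]; first by case.
by move=> h; exists x0, y.
Qed.

Lemma dmax_le_P s : inmon (Sgens e a) s -> dmax e a s <= #|Pset e a (adj e a s)|.
Proof. by move=> Hs; rewrite dmax_Q //; apply: subset_leq_card; exact: Q_sub. Qed.

Lemma Q_R s u' : inmon (Sgens e a) s -> (exists c, fD u' c) ->
  u' < adj e a s -> adj e a s %% e = u' %% e ->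
  Qset (adj e a s) (ordS e a s) \subset Rset_succ e a (adj e a s) u'.
Proof.
move=> Hs Hne Hlt Hm; apply/subsetP => x.
rewrite inE => /andP[xP0 /andP[/eqP h0 hl]].
have xP : x \in Pset e a (adj e a s) by move: xP0; rewrite /Pset /facts inE.
have [x0 [y [E Hf]]] := tv_D xP.
rewrite E /= in h0; subst x0.
case/fD_y: Hf => Hsz Hu.
rewrite inE xP /=; rewrite flen_tv E /= in hl *.
by apply: claimA => //; rewrite Hu.
Qed.

Lemma dmax_le_R s u' : inmon (Sgens e a) s -> (exists c, fD u' c) ->
  u' < adj e a s -> adj e a s %% e = u' %% e ->
  dmax e a s <= #|Rset_succ e a (adj e a s) u'|.
Proof.
by move=> *; rewrite dmax_Q //; apply: subset_leq_card; exact: Q_R.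
Qed.


Lemma ordS_eq s L u : inmon (Sgens e a) s -> adj e a s = u -> s = L * e + u -> ordS e a s = L.
Proof.
move=> Hs Hu HL; have [_ [_ _ _ Hsd]] := adj_spec Hs.
move: Hsd; rewrite Hu; set O := ordS e a s => Hsd.
apply/eqP; rewrite -(eqn_pmul2r He); apply/eqP.
move: Hsd HL; clear; lia.
Qed.

Lemma B0 i u : in_adjSi e a i u -> (forall v, in_adjSi e a i v -> u <= v) ->
  exists s, [/\ inSi e a i s, adj e a s = u & dmax e a s = #|Pset e a u|].
Proof.
case=> s0 [[Hs0 Hi] Hu] Hmin.
have [Hs' Ha'] := adj_mono u Hs0.
have Hi' : (s0 + u * e) %% e = i by rewrite addnC modnMDl.
have Hadj : adj e a (s0 + u * e) = u.
  by apply/eqP; rewrite eqn_leq -{2}Hu Ha' Hmin //; exists (s0 + u * e).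
exists (s0 + u * e); split => //.
have [_ [_ _ _ Hsd0]] := adj_spec Hs0.
set L := ordS e a s0 + u.
have HL : ordS e a (s0 + u * e) = L.
  by apply: ordS_eq Hadj _ => //; rewrite {1}Hsd0 Hu /L; lia.
rewrite dmax_Q // Hadj HL; congr #|pred_of_set _|.
apply/setP => x; rewrite inE; apply/andb_idr => xP.
have [x0 [y [E Hf]]] := tv_D xP.
have Hsum : sumn (x0 :: y) <= u.
  case: (Hf) => h1 h2; rewrite -h2; apply: sumn_le_dot; first exact: posD.
  by rewrite h1 /= size_map.
have Hx0 : x0 = 0.
  apply: (x0_zero HL) Hf _; first by rewrite {1}Hsd0 Hu /L; lia.
  by move: Hsum => /=; rewrite /L; lia.
by rewrite E Hx0 /= flen_tv E /L; move: Hsum => /=; lia.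
Qed.


Lemma adjSi_ne i u : in_adjSi e a i u -> exists c, fD u c.
Proof.
case=> s [[Hs _] <-]; have [y [Hsz _ HW _]] := adj_spec Hs.
by exists (0 :: y); apply/fD_y; split => //; rewrite HW.
Qed.

Lemma adjSi_mod i u : in_adjSi e a i u -> u %% e = i.
Proof. by case=> s [[Hs Hi] <-]; rewrite adj_mod. Qed.

Lemma minord_adj s : inmon (Sgens e a) s ->
  adj e a s * 1 + minordB e a (adj e a s) * e <= s.
Proof.
move=> Hs; have [y [Hsz Hl HW Hsd]] := adj_spec Hs.
have Hf : fD (adj e a s) (0 :: y) by apply/fD_y; split => //; rewrite HW.
have := minord_le Hf => /= Hm.
have := leq_mul (leq_trans Hm Hl) (leqnn e).
move: Hsd; set O := ordS e a s; set u := adj e a s; set m := minordB e a u.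
move=> Hsd h; lia.
Qed.

Lemma B1 i u u' : in_adjSi e a i u -> in_adjSi e a i u' -> u' < u ->
  (forall v, in_adjSi e a i v -> v < u -> v <= u') ->
  exists s, [/\ inSi e a i s, adj e a s = u & dmax e a s = #|Rset_succ e a u u'|].
Proof.
move=> Hu Hu' Hlt Hpred.
have Hne := adjSi_ne Hu'.
have Hm : u %% e = u' %% e by rewrite (adjSi_mod Hu) (adjSi_mod Hu').
have HK := modK (ltnW Hlt) Hm.
case: (Hu) => s0 [[Hs0 Hi0] Hs0u].
have [y0 [Hsz0 Hl0 HW0 Hsd0]] := adj_spec Hs0.
have Hc0 : sumn y0 + (u - u') %/ e < minordB e a u'.
  by rewrite -Hs0u; apply: claimA => //; rewrite ?Hs0u // Hm.
move: HK Hc0; set K := (u - u') %/ e; set m' := minordB e a u' => HK Hc0.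
set L' := m' - K.+1.
have Hl' : sumn y0 <= L' by rewrite /L'; lia.
have [Hs' Ho'] := adj_le Hsz0 Hl'.
rewrite HW0 Hs0u in Hs' Ho'.
set s' := L' * e + u in Hs' Ho' *.
have Hi' : s' %% e = i by rewrite /s' modnMDl -Hs0u adj_mod // Hi0.
have Hin' : in_adjSi e a i (adj e a s') by exists s'.
case: (Hu') => s1 [[Hs1 Hi1] Hs1u].
have Hge : u' <= adj e a s'.
  have := minord_adj Hs1; rewrite Hs1u -/m' => Hs1b.
  have Hle : s' <= s1.
    have Hdiff : L' * e + u + e <= s1.
      move: Hs1b; rewrite HK; clear -Hc0.
      have : (L' + K + 1) * e <= m' * e by apply: leq_mul => //; rewrite /L'; lia.
      rewrite !mulnDl; lia.
    by rewrite /s'; lia.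
  have Hmod : s1 = s' + (s1 - s') %/ e * e.
    apply: modK => //; rewrite Hi'; exact: Hi1.
  have [_ Hm2] := adj_mono ((s1 - s') %/ e) Hs'.
  by rewrite -Hmod Hs1u in Hm2.
have Hneq : adj e a s' != u'.
  apply/eqP => E.
  have := minord_adj Hs'; rewrite E -/m' /s' HK => h.
  have : (L' + K + 1) * e <= m' * e by apply: leq_mul => //; rewrite /L'; lia.
  rewrite !mulnDl; move: h He; clear; lia.
have Hgeu : u <= adj e a s'.
  rewrite leqNgt; apply/negP => h.
  have := Hpred _ Hin' h => h2.
  by move: Hneq Hge h2; rewrite neq_ltn => /orP[] h3 h4 h5; lia.
have [_ [_ _ _ Hsd']] := adj_spec Hs'.
have Hadj : adj e a s' = u.
  apply/eqP; rewrite eqn_leq Hgeu andbT.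
  have := leq_mul Ho' (leqnn e).
  move: Hsd'; rewrite /s'; set O := ordS e a _; set v := adj e a _; lia.
have HL : ordS e a s' = L' by apply: ordS_eq Hadj _.
have QR := Q_R Hs' Hne.
rewrite Hadj HL in QR; have {}QR := QR Hlt Hm.
exists s'; split => //.
rewrite dmax_Q // Hadj HL; congr #|pred_of_set _|.
apply/setP => x; apply/idP/idP; first exact: (subsetP QR).
rewrite inE => /andP[xP0 h].
have xP : x \in Pset e a u by move: xP0; rewrite /Pset /facts inE.
have [x0 [y [E Hf]]] := tv_D xP.
rewrite flen_tv E /= -/K -/m' in h.
have hl : x0 + sumn y <= L' by rewrite /L'; lia.
have Hx0 : x0 = 0.
  apply: (x0_zero HL) Hf _ => //; lia.
rewrite inE xP /= E flen_tv E Hx0 /=.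
by rewrite Hx0 in hl.
Qed.


Lemma Rcard_ex i u : in_adjSi e a i u -> exists k, Rcard e a i u k /\
  (forall s, inSi e a i s -> adj e a s = u -> dmax e a s <= k).
Proof.
move=> Hu.
case: (classic (exists v, in_adjSi e a i v /\ v < u)) => [Hex | Hno].
  have [u' [[Hu' Hlt] Hmax]] := maxP Hex (fun k (h : in_adjSi e a i k /\ k < u) => ltnW h.2).
  exists #|Rset_succ e a u u'|; split.
    right; exists u'; split => // v Hv Hvl; exact: Hmax.
  move=> s [Hs Hsi] Hsu; rewrite -Hsu; apply: dmax_le_R => //.
  - exact: adjSi_ne Hu'.
  - by rewrite Hsu.
  - by rewrite adj_mod // Hsi (adjSi_mod Hu').
exists #|Pset e a u|; split.
  left; split => // v Hv; rewrite leqNgt; apply/negP => h; apply: Hno; by exists v.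
by move=> s [Hs _] <-; exact: dmax_le_P.
Qed.

Lemma Rcard_bound i u k : Rcard e a i u k -> k <= (u.+1) ^ (size (Dgens e a)).
Proof.
have HP : #|Pset e a u| <= u.+1 ^ size (Dgens e a).
  by have := max_card (mem (Pset e a u)); rewrite card_ffun !card_ord.
case=> [[_ <-] // | [u' [_ _ _ <-]]].
apply: leq_trans HP; apply: subset_leq_card; apply/subsetP => x.
by rewrite inE => /andP[].
Qed.

End S.

Theorem corollary3p10 (e : nat) (a : seq nat) (i : nat) :
  numsg_min_gens e a -> i < e ->
  exists m : nat,
    [/\ (exists s, inSi e a i s /\ dmax e a s = m),
        (forall s, inSi e a i s -> dmax e a s <= m),
        (exists u, in_adjSi e a i u /\ Rcard e a i u m)
      & (forall u k, in_adjSi e a i u -> Rcard e a i u k -> k <= m)].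
Proof.
case=> He Hsort [N HN] _ Hi.
have Ha : all (fun x => e < x) a.
  by move: Hsort; rewrite /Sgens /= => /(order_path_min ltn_trans).
have Hs1 : inSi e a i (N * e + i).
  split; first by apply: HN; rewrite -{1}(muln1 N); apply: leq_trans (leq_mul (leqnn N) He) (leq_addr _ _).
  by rewrite modnMDl modn_small.
have Hex : exists s, (fun s => inmon (Sgens e a) s && (s %% e == i)) s.
  by exists (N * e + i); case: Hs1 => -> /eqP.
case: (ex_minnP Hex) => smin /andP[Hsm /eqP Hsmi] Hmin.
have Hubound : forall u, in_adjSi e a i u -> u <= adj e a smin.
  move=> u [s [[Hs Hsi] <-]].
  have Hle : smin <= s by apply: Hmin; rewrite Hs Hsi eqxx.
  have := modK (a := a) He Ha Hle; rewrite Hsi Hsmi => /(_ erefl) Hs'.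
  have [_ Hm] := adj_mono He Ha ((s - smin) %/ e) Hsm.
  by rewrite -Hs' in Hm.
pose P k := exists u, in_adjSi e a i u /\ Rcard e a i u k.
have HexP : exists k, P k.
  have [k [Hk _]] := Rcard_ex He Ha (u := adj e a (N * e + i)) (ex_intro _ _ (conj Hs1 erefl)).
  by exists k, (adj e a (N * e + i)); split => //; exists (N * e + i).
have HbP : forall k, P k -> k <= (adj e a smin).+1 ^ size (Dgens e a).
  move=> k [u [Hu Hk]]; apply: leq_trans (Rcard_bound Hk) _.
  by rewrite leq_exp2r // ltnS; exact: Hubound.
have [m [[us [Hus Hm]] Hmax]] := maxP HexP HbP.
exists m; split.
- case: Hm => [[Hmin' <-] | [u' [Hu' Hlt Hpred <-]]].
    by have [s [Hs _ Hd]] := B0 He Ha Hus Hmin'; exists s.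
  by have [s [Hs _ Hd]] := B1 He Ha Hus Hu' Hlt Hpred; exists s.
- move=> s Hs.
  have [k [Hk Hd]] := Rcard_ex He Ha (u := adj e a s) (ex_intro _ _ (conj Hs erefl)).
  apply: leq_trans (Hd s Hs erefl) _; apply: Hmax.
  by exists (adj e a s); split => //; exists s.
- by exists us.
- by move=> u k Hu Hk; apply: Hmax; exists u.
Qed.
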